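(* For a threshold graph $G$ with $n$ vertices, the matching number (maximum number of edges in a matching) satisfies $$\nu(G)=\left\lfloor\frac{n-h(\mathrm{seq}(G))}{2}\right\rfloor.$$
   Context: A threshold graph on $n\ge1$ vertices is built from a base vertex $v_0$ by successively adding $v_1,\dots,v_{n-1}$, each either isolated (adjacent to no earlier vertex) or dominating (adjacent to all earlier vertices); its creation sequence $\mathrm{seq}(G)=s_1\cdots s_{n-1}$ has $s_i=1$ if $v_i$ is dominating and $s_i=0$ otherwise. For a binary string $s=s_1\cdots s_m$ and $0\le k\le m$, the $k$-th tail is $s_{m-k+1}\cdots s_m$ (empty for $k=0$); $z_k(s)$, $u_k(s)$ are the numbers of zeros and ones in it, and $h(s)=\max_{0\le k\le m}\{z_k(s)-u_k(s)\}$. *)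

(* Defs.v *)
From mathcomp Require Import all_boot all_order all_algebra.
Set Implicit Arguments. Unset Strict Implicit. Unset Printing Implicit Defensive.
Import Order.TTheory GRing.Theory Num.Theory.
Local Open Scope ring_scope.

(* Threshold graph with creation sequence s = s_1 ... s_{n-1} on vertices
   v_0,...,v_{n-1} represented by 'I_n.  For i < j, v_i v_j is an edge iff
   v_j is dominating, i.e. s_j = true (s_j = nth false s (j-1)). *)
Definition tg_adj (n : nat) (s : seq bool) : rel 'I_n :=
  fun i j => (i != j) && nth false s (maxn i j).-1.

Definition is_matching (T : finType) (e : rel T) (M : {set {set T}}) : bool :=
  [forall E in M, exists u, exists v, [&& u != v, e u v & E == [set u; v]]] &&
  [forall E in M, forall F in M, (E != F) ==> [disjoint E & F]].

Definition matching_number (T : finType) (e : rel T) : nat :=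
  \max_(M : {set {set T}} | is_matching e M) #|M|.

Definition tail_k (s : seq bool) (k : nat) : seq bool := drop (size s - k)%N s.
Definition zk (s : seq bool) (k : nat) : nat := count negb (tail_k s k).
Definition uk (s : seq bool) (k : nat) : nat := count id (tail_k s k).

Definition hseq (s : seq bool) : int :=
  \big[Num.max/((zk s 0)%:Z - (uk s 0)%:Z)]_(k < (size s).+1)
     ((zk s k)%:Z - (uk s k)%:Z).

(* Main.v *)
Require Import Defs.
From mathcomp Require Import all_boot all_order all_algebra.
From mathcomp Require Import zify.
Import Order.TTheory GRing.Theory Num.Theory.
Local Open Scope ring_scope.

Fixpoint gn (r : seq bool) : nat :=
  if r is b :: r' then (if b then (gn r').-1 else (gn r').+1) else 0%N.

Definition Dr (r : seq bool) (k : nat) : int :=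
  (count negb (take k r))%:Z - (count id (take k r))%:Z.

Lemma Dr_le r k : Dr r k <= (gn r)%:Z.
Proof.
elim: r k => [|b r IH] [|k]; rewrite /Dr /= ?subrr //.
have := IH k; rewrite /Dr; case: b => /=; lia.
Qed.

Lemma Dr_ex r : exists2 k, (k <= size r)%N & Dr r k = (gn r)%:Z.
Proof.
elim: r => [|b r [k kr IH]]; first by exists 0%N; rewrite /Dr.
case: b.
  case: (posnP (gn r)) => g0.
    by exists 0%N => //; rewrite /Dr /= g0.
  exists k.+1; first by [].
  move: IH; rewrite /Dr /=; lia.
exists k.+1; first by [].
move: IH; rewrite /Dr /=; lia.
Qed.

Lemma hseq_gn s : hseq s = (gn (rev s))%:Z.
Proof.
have E k : (zk s k)%:Z - (uk s k)%:Z = Dr (rev s) k.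
  by rewrite /Dr take_rev !count_rev.
rewrite /hseq.
under eq_bigr => k _ do rewrite E.
rewrite E.
apply/le_anti/andP; split.
  apply/bigmax_leP; split; first exact: Dr_le.
  by move=> i _; exact: Dr_le.
have [k kr <-] := Dr_ex (rev s).
rewrite size_rev in kr.
have kr' : (k < (size s).+1)%N by [].
exact: (@le_bigmax_cond _ _ _ _ (Ordinal kr') xpredT (fun i : 'I_ _ => Dr (rev s) i)).
Qed.

Lemma match_mono {T : finType} (e e' : rel T) M :
  (forall u v, e u v -> e' u v) -> is_matching e M -> is_matching e' M.
Proof.
move=> H /andP[/forallP H1 H2]; apply/andP; split=> //.
apply/forallP => E; apply/implyP => EM.
have /implyP/(_ EM)/existsP[u /existsP[v /and3P[a b c]]] := H1 E.
by apply/existsP; exists u; apply/existsP; exists v; rewrite a c H.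
Qed.

Lemma nu_ub {T : finType} {e : rel T} {M} :
  is_matching e M -> (#|M| <= matching_number e)%N.
Proof. by move=> HM; apply: leq_bigmax_cond. Qed.

Lemma nu_ex {T : finType} (e : rel T) :
  exists2 M, is_matching e M & #|M| = matching_number e.
Proof.
have h0 : is_matching e set0.
  by apply/andP; split; apply/forallP => E; rewrite in_set0.
have : (0 < #|is_matching e|)%N by apply/card_gt0P; exists set0.
move=> /(@eq_bigmax_cond _ _ (fun M : {set {set T}} => #|M|)) [M HM HE].
by exists M => //; rewrite /matching_number HE.
Qed.

Lemma nu_mono {T : finType} (e e' : rel T) :
  (forall u v, e u v -> e' u v) -> (matching_number e <= matching_number e')%N.
Proof.
move=> H; have [M HM <-] := nu_ex e; apply: nu_ub; exact: match_mono HM.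
Qed.

Lemma card_lt_k n k (A : {set 'I_n}) :
  (forall x, x \in A -> (x < k)%N) -> (#|A| <= k)%N.
Proof.
move=> H; rewrite cardE -(size_map val) -(size_iota 0 k).
apply: uniq_leq_size; first by rewrite map_inj_uniq ?enum_uniq //; exact: val_inj.
move=> y /mapP[x]; rewrite mem_enum => /H xk ->; rewrite mem_iota add0n xk.
by [].
Qed.

Lemma k_le_card n k (C : {set 'I_n}) :
  (k <= n)%N -> (forall x : 'I_n, (x < k)%N -> x \in C) -> (k <= #|C|)%N.
Proof.
move=> kn H; rewrite cardE -(size_map val) -{1}(size_iota 0 k).
apply: uniq_leq_size (iota_uniq 0 k) _.
move=> y; rewrite mem_iota add0n /= => yk.
have yn : (y < n)%N by apply: leq_trans kn.
by apply/mapP; exists (Ordinal yn) => //; rewrite mem_enum; apply: H.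
Qed.

Lemma match_cover {T : finType} {e : rel T} {M} :
  is_matching e M -> #|cover M| = (2 * #|M|)%N.
Proof.
move=> /andP[/forallP H1 /forallP H2].
have tM : trivIset M.
  apply/trivIsetP => A B HA HB neq.
  by have /implyP/(_ HA)/forallP/(_ B)/implyP/(_ HB)/implyP/(_ neq) := H2 A.
rewrite -(eqP tM) mulnC -sum_nat_const.
apply: eq_bigr => E EM.
have /implyP/(_ EM)/existsP[u /existsP[v /and3P[a b /eqP->]]] := H1 E.
by rewrite cards2 a.
Qed.

Lemma match_card {n} (e : rel 'I_n) k M :
  (forall u v, e u v -> (u < k)%N && (v < k)%N) ->
  is_matching e M -> (2 * #|M| <= k)%N.
Proof.
move=> Hk HM; rewrite -(match_cover HM); apply: card_lt_k => x /bigcupP[E EM xE].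
case/andP: HM => /forallP H1 _.
have /implyP/(_ EM)/existsP[u /existsP[v /and3P[a b /eqP EE]]] := H1 E.
move: xE; rewrite EE !inE => /orP[] /eqP ->; by case/andP: (Hk _ _ b).
Qed.
Definition ek n s k : rel 'I_n :=
  fun i j => @tg_adj n s i j && (i < k)%N && (j < k)%N.

Lemma step_false n s k (kn : (k < n)%N) : nth false s k.-1 = false ->
  matching_number (ek n s k.+1) = matching_number (ek n s k).
Proof.
move=> b0; apply/eqP; rewrite eqn_leq; apply/andP; split; apply: nu_mono => u v;
  rewrite /ek /tg_adj.
  move=> /andP[/andP[/andP[neq hn] hu] hv]; rewrite neq /=.
  have : ~~ ((k <= u)%N || (k <= v)%N).
    apply/negP => H; have mk : maxn u v = k.
      by clear hn neq; move: hu hv H; rewrite !ltnS; lia.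
    by rewrite mk b0 in hn.
  rewrite hn /=; clear hn neq; move: hu hv; rewrite !ltnS; lia.
by move=> /andP[/andP[-> hu] hv]; rewrite !ltnS (ltnW hu) (ltnW hv).
Qed.

Lemma step_2 n s k : (2 * matching_number (ek n s k) <= k)%N.
Proof.
have [M HM <-] := nu_ex (ek n s k).
by apply: match_card HM => u v /andP[/andP[_ ->] ->].
Qed.

Lemma step_ub n s k (kn : (k < n)%N) :
  (matching_number (ek n s k.+1) <= matching_number (ek n s k) + 1)%N.
Proof.
have [M HM <-] := nu_ex (ek n s k.+1).
set vk := Ordinal kn.
set M' := [set E in M | vk \notin E].
set P1 := [set E in M | vk \in E].
case/andP: (HM) => /forallP H1 /forallP H2.
have HM' : is_matching (ek n s k) M'.
  apply/andP; split.
  - apply/forallP => E; apply/implyP; rewrite inE => /andP[EM vE].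
    have /implyP/(_ EM)/existsP[u /existsP[v /and3P[a b c]]] := H1 E.
    apply/existsP; exists u; apply/existsP; exists v; rewrite a c andbT /=.
    move: b vE; rewrite (eqP c) !inE /ek => /andP[/andP[-> hu] hv].
    rewrite negb_or -!val_eqE /= => /andP[uk vk']; lia.
  - apply/forallP => E; apply/implyP; rewrite inE => /andP[EM _].
    apply/forallP => F; apply/implyP; rewrite inE => /andP[FM _].
    by have /implyP/(_ EM)/forallP/(_ F)/implyP/(_ FM) := H2 E.
have P1le : (#|P1| <= 1)%N.
  rewrite leqNgt; apply/negP => /card_gt1P [E [F [EP FP neq]]].
  move: EP FP; rewrite !inE => /andP[EM vE] /andP[FM vF].
  have /implyP/(_ EM)/forallP/(_ F)/implyP/(_ FM)/implyP/(_ neq) d := H2 E.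
  by rewrite (disjointFr d vE) in vF.
have : M \subset P1 :|: M'.
  by apply/subsetP => E EM; rewrite !inE EM; case: (vk \in E).
move/subset_leq_card => H.
have := (leq_card_setU P1 M').1.
have := nu_ub HM'.
lia.
Qed.

Lemma step_true n s k (kn : (k < n)%N) : nth false s k.-1 ->
  (2 * matching_number (ek n s k) < k)%N ->
  (matching_number (ek n s k) + 1 <= matching_number (ek n s k.+1))%N.
Proof.
move=> b lt; have [M HM HE] := nu_ex (ek n s k); rewrite -HE in lt *.
set vk := Ordinal kn.
have cM := match_cover HM.
have [x xk xC] : exists2 x : 'I_n, (x < k)%N & x \notin cover M.
  case: (boolP [exists x : 'I_n, (x < k)%N && (x \notin cover M)]) =>
    [/existsP[x /andP[xk xC]] | /existsPn H]; first by exists x.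
  have : (k <= #|cover M|)%N.
    apply: k_le_card; first exact: ltnW.
    by move=> x xk; have := H x; rewrite xk /= negbK.
  lia.
have xv : x != vk by rewrite -val_eqE /= neq_ltn xk.
have xE : [set x; vk] \notin M.
  apply/negP => EM; suff xC' : x \in cover M by rewrite xC' in xC.
  by apply/bigcupP; exists [set x; vk] => //; rewrite !inE eqxx.
case/andP: (HM) => /forallP H1 /forallP H2.
have Hedge F : F \in M -> x \notin F /\ vk \notin F.
  move=> FM; split.
    apply/negP => xF; suff xC' : x \in cover M by rewrite xC' in xC.
    by apply/bigcupP; exists F.
  have /implyP/(_ FM)/existsP[u /existsP[v /and3P[_ c /eqP ->]]] := H1 F.
  move: c => /andP[/andP[_ hu] hv]; rewrite !inE -!val_eqE /=.
  by apply/negP; case/orP => /eqP E; lia.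
have HM2 : is_matching (ek n s k.+1) ([set x; vk] |: M).
  apply/andP; split.
  - apply/forallP => E; apply/implyP; rewrite !inE => /orP[/eqP -> | EM].
      apply/existsP; exists x; apply/existsP; exists vk; rewrite xv eqxx andbT /=.
      rewrite /ek /tg_adj xv /=.
      have -> : maxn x k = k by apply/maxn_idPr/ltnW.
      by rewrite b ltnS (ltnW xk) ltnSn.
    have /implyP/(_ EM)/existsP[u /existsP[v /and3P[a c d]]] := H1 E.
    apply/existsP; exists u; apply/existsP; exists v; rewrite a d andbT /=.
    move: c; rewrite /ek => /andP[/andP[-> hu] hv].
    by rewrite !ltnS (ltnW hu) (ltnW hv).
  - apply/forallP => E; apply/implyP; rewrite !inE => EM.
    apply/forallP => F; apply/implyP; rewrite !inE => FM; apply/implyP => neq.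
    case/orP: EM => [/eqP EE | EM]; case/orP: FM => [/eqP FE | FM].
    + by rewrite EE FE eqxx in neq.
    + have [h1 h2] := Hedge F FM; rewrite EE disjoint_subset.
      by apply/subsetP => y; rewrite !inE => /orP[] /eqP ->.
    + have [h1 h2] := Hedge E EM; rewrite FE disjoint_sym disjoint_subset.
      by apply/subsetP => y; rewrite !inE => /orP[] /eqP ->.
    + by have /implyP/(_ EM)/forallP/(_ F)/implyP/(_ FM)/implyP/(_ neq) := H2 E.
have := nu_ub HM2; rewrite cardsU1 xE.
by rewrite addn1.
Qed.

Lemma invariant n s (sz : size s = n.-1) k : (1 <= k <= n)%N ->
  (2 * matching_number (ek n s k) + gn (rev (take k.-1 s)) <= k <=
   2 * matching_number (ek n s k) + gn (rev (take k.-1 s)) + 1)%N.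
Proof.
elim: k => [|k IH]; first by [].
move=> /andP[k1 kn].
case: (posnP k) => [k0 | kpos].
  subst k; rewrite take0 /=; have := step_2 n s 1; lia.
have {IH} IH := IH (ltac:(apply/andP; split; [exact: kpos | exact: ltnW])).
have ks : (k.-1 < size s)%N by rewrite sz; lia.
rewrite /=.
have -> : take k s = rcons (take k.-1 s) (nth false s k.-1).
  by rewrite -(take_nth false ks) prednK.
rewrite rev_rcons /=.
have kn' : (k < n)%N by [].
case b : (nth false s k.-1).
  have h1 := step_ub n s k kn'.
  have h2 := step_2 n s k.+1.
  have h3 := step_true n s k kn' b.
  have h4 : (matching_number (ek n s k) <= matching_number (ek n s k.+1))%N.
    apply: nu_mono => u v; rewrite /ek => /andP[/andP[-> hu] hv].
    by rewrite !ltnS (ltnW hu) (ltnW hv).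
  move: IH h1 h2 h3 h4; set N := matching_number _; set N' := matching_number _.
  lia.
rewrite (step_false n s k kn' b); move: IH; lia.
Qed.

Theorem mainTheorem6 (n : nat) (s : seq bool) :
  (1 <= n)%N -> size s = n.-1 ->
  (matching_number (@tg_adj n s))%:Z = ((n%:Z - hseq s) %/ 2)%Z.
Proof.
move=> n1 sz.
have I := invariant n s sz n (ltac:(apply/andP; split; [exact: n1 | exact: leqnn])).
have e : take n.-1 s = s by rewrite -sz take_size.
rewrite e in I.
have Heq : matching_number (ek n s n) = matching_number (@tg_adj n s).
  apply/eqP; rewrite eqn_leq; apply/andP; split; apply: nu_mono => u v.
    by move=> /andP[/andP[-> _] _].
  by move=> H; rewrite /ek H !ltn_ord.
rewrite hseq_gn -Heq.
move: I; set N := matching_number _; set h := gn (rev s) => I.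
have -> : (n%:Z - h%:Z) = (N%:Z * 2 + (n%:Z - h%:Z - N%:Z * 2))%R.
  lia.
rewrite divzMDl // divz_small ?addr0 //.
apply/andP; split; rewrite /=; lia.
Qed.
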